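(* Assume the setting in the context (including conditions (1) and (2) on $\theta_i$). Let $\tilde x\in\tilde{\mathcal{X}}$, $i\in N$ and $\eta\ge0$. If there exist a generator $Z(i,\tilde x)$ for $(i,\tilde x)$ and $h\in\partial_i\tilde f_i(\tilde x_i,\tilde x_{-i})$ such that $$\langle h,x_i-\tilde x_i\rangle\ge-\eta\|x_i-\tilde x_i\|\quad\text{for all }x_i\in\operatorname{conv}Z(i,\tilde x),$$ then $|\tilde f_i(x_i,\tilde x_{-i})-\tilde f_i(\tilde x_i,\tilde x_{-i})|\le\eta\|x_i-\tilde x_i\|$ for all $x_i\in Z(i,\tilde x)$. In particular, if this hypothesis holds for every player $i$ with generators $(Z(i,\tilde x))_i$, then $\tilde x$ satisfies the $\eta\Delta$-stability condition with respect to $(Z(i,\tilde x))_i$.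
   Context: Setting: $N=\{1,\dots,n\}$; for each $i$, $\mathcal{X}_i\subset\mathbb{R}^d$ nonempty closed bounded with diameter $\le\Delta$, $\tilde{\mathcal{X}}_i=\operatorname{conv}(\mathcal{X}_i)$, $\tilde{\mathcal{X}}=\prod_i\tilde{\mathcal{X}}_i$, $\tilde{\mathcal{X}}_{-i}=\prod_{j\neq i}\tilde{\mathcal{X}}_j$; $A_j$ real $q\times d$ matrices; $\Omega\subset\mathbb{R}^q$ a neighborhood of $\{\frac1n\sum_jA_jy_j:y_j\in\tilde{\mathcal{X}}_j\}$; $\theta_i:\mathcal{X}_i\times\Omega\to\mathbb{R}$ with (1) $\theta_i(\cdot,y)$ lower semicontinuous on $\mathcal{X}_i$ for each $y\in\Omega$, (2) $|\theta_i(x_i,y')-\theta_i(x_i,y)|\le H\|y'-y\|^\gamma$ for some constants $H,\gamma>0$. Costs $f_i(x_i,x_{-i})=\theta_i(x_i,\frac1n\sum_jA_jx_j)$ for $x_i\in\mathcal{X}_i,x_{-i}\in\tilde{\mathcal{X}}_{-i}$. Convexified cost: $\tilde f_i(x_i,x_{-i})=\inf\{\sum_{k=1}^{d+1}\alpha^kf_i(z^k,x_{-i}):\alpha\in\mathcal{S}_d,z^k\in\mathcal{X}_i,x_i=\sum_k\alpha^kz^k\}$ for $x\in\tilde{\mathcal{X}}$, $\mathcal{S}_d$ the probability simplex of $\mathbb{R}^{d+1}$; the function $\tilde f_i(\cdot,x_{-i})$ is convex on $\tilde{\mathcal{X}}_i$ and $\partial_i\tilde f_i(\tilde x_i,\tilde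 x_{-i})$ denotes its subdifferential at $\tilde x_i$. A generator for $(i,x)$ is a set $Z(i,x)=\{z^1,\dots,z^{d+1}\}\subset\mathcal{X}_i$ with weights $\alpha\in\mathcal{S}_d$ attaining the infimum ($x_i=\sum_k\alpha^kz^k$, $\tilde f_i(x_i,x_{-i})=\sum_k\alpha^kf_i(z^k,x_{-i})$). A point $x\in\tilde{\mathcal{X}}$ satisfies the $\eta$-stability condition with respect to a generator profile $(Z(i,x))_i$ if for every $i$, $\tilde f_i(y_i,x_{-i})\le\tilde f_i(x_i,x_{-i})+\eta$ for all $y_i\in Z(i,x)$.
   Formalization: A generator for (i, x̃) carries weights α that are all strictly positive, αᵏ > 0 for every k, in place of weights in $\mathcal{S}_d$ with zero entries allowed. The statement above fails without it. *)

(* Defs.v *)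
From HB Require Import structures.
From mathcomp Require Import all_boot all_order all_algebra.
From mathcomp Require Import classical_sets reals exp.
Set Implicit Arguments. Unset Strict Implicit. Unset Printing Implicit Defensive.
Import Order.TTheory GRing.Theory Num.Theory.
Local Open Scope classical_set_scope.
Local Open Scope ring_scope.

Section Defs.
Variable R : realType.

Definition dotv (d : nat) (u v : 'cV[R]_d) : R := \sum_(k < d) u k 0 * v k 0.
Definition enorm (d : nat) (u : 'cV[R]_d) : R := Num.sqrt (dotv u u).

Definition conv (d : nat) (S : set 'cV[R]_d) : set 'cV[R]_d :=
  [set x | exists (m : nat) (w : 'I_m -> R) (z : 'I_m -> 'cV[R]_d),
     (forall k, 0 <= w k) /\ \sum_(k < m) w k = 1 /\
     (forall k, S (z k)) /\ x = \sum_(k < m) w k *: z k].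

Definition simplex (d : nat) (a : 'I_d.+1 -> R) : Prop :=
  (forall k, 0 <= a k) /\ \sum_(k < d.+1) a k = 1.

Variables (n d q : nat).
Implicit Types (x : 'I_n -> 'cV[R]_d) (i : 'I_n).

Definition upd x i (y : 'cV[R]_d) : 'I_n -> 'cV[R]_d :=
  fun j => if j == i then y else x j.

Definition avg (A : 'I_n -> 'M[R]_(q, d)) x : 'cV[R]_q :=
  n%:R^-1 *: \sum_(j < n) (A j *m x j).

Definition fcost (theta : 'I_n -> 'cV[R]_d -> 'cV[R]_q -> R)
  (A : 'I_n -> 'M[R]_(q, d)) i x : R := theta i (x i) (avg A x).

Variables (X : 'I_n -> set 'cV[R]_d) (theta : 'I_n -> 'cV[R]_d -> 'cV[R]_q -> R)
  (A : 'I_n -> 'M[R]_(q, d)).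

Definition tfcost i x : R :=
  inf [set r | exists (a : 'I_d.+1 -> R) (z : 'I_d.+1 -> 'cV[R]_d),
     simplex a /\ (forall k, X i (z k)) /\ x i = \sum_(k < d.+1) a k *: z k /\
     r = \sum_(k < d.+1) a k * fcost theta A i (upd x i (z k))].

Definition is_generator i x (z : 'I_d.+1 -> 'cV[R]_d) (a : 'I_d.+1 -> R) : Prop :=
  simplex a /\ (forall k, 0 < a k) /\ (forall k, X i (z k)) /\ x i = \sum_(k < d.+1) a k *: z k /\
  tfcost i x = \sum_(k < d.+1) a k * fcost theta A i (upd x i (z k)).

Definition subdiff i x (h : 'cV[R]_d) : Prop :=
  forall y, conv (X i) y -> tfcost i x + dotv h (y - x i) <= tfcost i (upd x i y).

Definition eta_stable (eta : R) x (Z : 'I_n -> 'I_d.+1 -> 'cV[R]_d) : Prop :=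
  forall i k, tfcost i (upd x i (Z i k)) <= tfcost i x + eta.

End Defs.

Definition setting (R : realType) (n d q : nat) (X : 'I_n -> set 'cV[R]_d) (Delta : R)
  (A : 'I_n -> 'M[R]_(q, d)) (Omega : set 'cV[R]_q)
  (theta : 'I_n -> 'cV[R]_d -> 'cV[R]_q -> R) (H gamma : R) : Prop :=
  (forall i, exists x, X i x) /\
  (forall i x, (forall e : R, 0 < e -> exists y, X i y /\ enorm (y - x) < e) -> X i x) /\
  (forall i x y, X i x -> X i y -> enorm (x - y) <= Delta) /\
  (forall y : 'I_n -> 'cV[R]_d, (forall j, conv (X j) (y j)) ->
     exists e : R, 0 < e /\ forall w, enorm (w - avg A y) < e -> Omega w) /\
  (forall i y, Omega y -> forall x, X i x -> forall e : R, 0 < e ->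
     exists del : R, 0 < del /\
       forall x', X i x' -> enorm (x' - x) < del -> theta i x y - e < theta i x' y) /\
  0 < H /\ 0 < gamma /\
  (forall i x y y', X i x -> Omega y -> Omega y' ->
     `|theta i x y' - theta i x y| <= H * powR (enorm (y' - y)) gamma).

(* Main.v *)
Require Import Defs.
From HB Require Import structures.
From mathcomp Require Import all_boot all_order all_algebra.
From mathcomp Require Import classical_sets boolp reals exp topology normedtype.
From mathcomp Require Import ring lra finmap.
Import Order.TTheory GRing.Theory Num.Theory.
Import numFieldNormedType.Exports.
Local Open Scope classical_set_scope.
Local Open Scope ring_scope.
Set Implicit Arguments. Unset Strict Implicit.

Section Aux.
Variable R : realType.

Lemma dotv_ge0 d (u : 'cV[R]_d) : 0 <= dotv u u.
Proof. by apply: sumr_ge0 => k _; rewrite -expr2 sqr_ge0. Qed.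

Lemma enorm_ge0 d (u : 'cV[R]_d) : 0 <= enorm u.
Proof. exact: sqrtr_ge0. Qed.

Lemma enorm0 d : enorm (0 : 'cV[R]_d) = 0.
Proof. by rewrite /enorm /dotv big1 ?sqrtr0 // => k _; rewrite mxE mul0r. Qed.

Lemma coord_le_enorm d (u : 'cV[R]_d) j : `|u j 0| <= enorm u.
Proof.
rewrite /enorm -(sqrtr_sqr (u j 0)) ler_sqrt; last exact: dotv_ge0.
rewrite /dotv (bigD1 j) //= expr2 lerDl; apply: sumr_ge0 => k _.
by rewrite -expr2 sqr_ge0.
Qed.

Lemma enorm_le_sum d (u : 'cV[R]_d) : enorm u <= \sum_k `|u k 0|.
Proof.
have S0 : 0 <= \sum_k `|u k 0| by apply: sumr_ge0 => k _.
rewrite -[X in _ <= X]ger0_norm // -sqrtr_sqr ler_sqrt ?sqr_ge0 //.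
rewrite /dotv expr2 mulr_suml; apply: ler_sum => k _.
have -> : u k 0 * u k 0 = `|u k 0| * `|u k 0|.
  by rewrite -normrM ger0_norm // -expr2 sqr_ge0.
apply: ler_wpM2l => //.
by rewrite (bigD1 k) //= lerDl; apply: sumr_ge0.
Qed.

Lemma dotvDr d (h u v : 'cV[R]_d) : dotv h (u + v) = dotv h u + dotv h v.
Proof. by rewrite /dotv -big_split; apply: eq_bigr => k _; rewrite mxE mulrDr. Qed.

Lemma dotvZr d (h u : 'cV[R]_d) c : dotv h (c *: u) = c * dotv h u.
Proof. by rewrite /dotv mulr_sumr; apply: eq_bigr => k _; rewrite mxE mulrCA. Qed.

Lemma dotvC d (u v : 'cV[R]_d) : dotv u v = dotv v u.
Proof. by apply: eq_bigr => k _; rewrite mulrC. Qed.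

Lemma dotv0r d (h : 'cV[R]_d) : dotv h 0 = 0.
Proof. by rewrite /dotv big1 // => k _; rewrite mxE mulr0. Qed.

Lemma dotvNr d (h u : 'cV[R]_d) : dotv h (- u) = - dotv h u.
Proof. by rewrite -scaleN1r dotvZr mulN1r. Qed.

Lemma dotvBr d (h u v : 'cV[R]_d) : dotv h (u - v) = dotv h u - dotv h v.
Proof. by rewrite dotvDr dotvNr. Qed.

Lemma dotv_sumr d (h : 'cV[R]_d) m (F : 'I_m -> 'cV[R]_d) :
  dotv h (\sum_(l < m) F l) = \sum_(l < m) dotv h (F l).
Proof. by apply: (big_morph (dotv h)); [exact: dotvDr | exact: dotv0r]. Qed.

Lemma cauchy_schwarz d (u v : 'cV[R]_d) : dotv u v <= enorm u * enorm v.
Proof.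
set a := enorm u; set b := enorm v.
have a0 : 0 <= a := enorm_ge0 u.
have b0 : 0 <= b := enorm_ge0 v.
have [ae|an0] := eqVneq a 0.
  rewrite ae mul0r /dotv big1 // => k _.
  have := coord_le_enorm u k; rewrite -/a ae.
  by rewrite normr_le0 => /eqP ->; rewrite mul0r.
have [be|bn0] := eqVneq b 0.
  rewrite be mulr0 /dotv big1 // => k _.
  have := coord_le_enorm v k; rewrite -/b be.
  by rewrite normr_le0 => /eqP ->; rewrite mulr0.
have ab0 : 0 < a * b by rewrite mulr_gt0 // lt0r ?an0 ?bn0.
have Ha : a ^+ 2 = dotv u u by rewrite sqr_sqrtr // dotv_ge0.
have Hb : b ^+ 2 = dotv v v by rewrite sqr_sqrtr // dotv_ge0.
have key : 2 * (a * b) * dotv u v <= b ^+ 2 * dotv u u + a ^+ 2 * dotv v v.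
  rewrite /dotv !mulr_sumr -big_split /=; apply: ler_sum => k _.
  have := sqr_ge0 (b * u k 0 - a * v k 0); nra.
rewrite -Ha -Hb in key.
have e : b ^+ 2 * a ^+ 2 + a ^+ 2 * b ^+ 2 = 2 * (a * b) * (a * b) by ring.
rewrite e ler_pM2l // in key.
by rewrite mulr_gt0.
Qed.

Lemma enormD d (u v : 'cV[R]_d) : enorm (u + v) <= enorm u + enorm v.
Proof.
have s0 : 0 <= enorm u + enorm v by rewrite addr_ge0 // enorm_ge0.
rewrite /enorm -[X in _ <= X]ger0_norm // -sqrtr_sqr ler_sqrt ?sqr_ge0 //.
have e1 : dotv (u + v) (u + v) = dotv u u + 2 * dotv u v + dotv v v.
  rewrite dotvDr ![dotv (u + v) _]dotvC !dotvDr (dotvC v u); ring.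
rewrite e1.
have := cauchy_schwarz u v; rewrite /enorm.
have := sqr_sqrtr (dotv_ge0 u); have := sqr_sqrtr (dotv_ge0 v).
set a := Num.sqrt _; set b := Num.sqrt _ => Hb Ha; rewrite -Ha -Hb => cs.
nra.
Qed.

Lemma enormZ d (u : 'cV[R]_d) c : enorm (c *: u) = `|c| * enorm u.
Proof.
rewrite /enorm dotvZr dotvC dotvZr mulrA -expr2 sqrtrM ?sqr_ge0 //.
by rewrite sqrtr_sqr.
Qed.

Lemma enormN d (u : 'cV[R]_d) : enorm (- u) = enorm u.
Proof. by rewrite -scaleN1r enormZ normrN normr1 mul1r. Qed.

Lemma enormB d (u v : 'cV[R]_d) : enorm (u - v) = enorm (v - u).
Proof. by rewrite -enormN opprB. Qed.

Lemma enorm_sum d m (F : 'I_m -> 'cV[R]_d) :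
  enorm (\sum_(l < m) F l) <= \sum_(l < m) enorm (F l).
Proof.
elim/big_rec2: _ => [|l y1 y2 _ IH]; first by rewrite enorm0.
by apply: le_trans (enormD _ _) _; rewrite lerD2l.
Qed.

End Aux.

Section Comp.
Variable R : realType.

Lemma lb_compact d (S : set 'cV[R]_d) (g : 'cV[R]_d -> R) (M : R) :
  (forall y, S y -> forall j, `|y j 0| <= M) ->
  (forall x : 'cV[R]_d, exists del, 0 < del /\ exists c,
      forall y, S y -> (forall j, `|x j 0 - y j 0| < del) -> c <= g y) ->
  exists c, forall y, S y -> c <= g y.
Proof.
move=> SM loc.
pose B := [set v : 'rV[R]_d | forall j, `[-M, M]%classic (v ord0 j)].
have cB : compact B.
  by apply: (@rV_compact _ _ (fun=> `[-M, M]%classic)) => j; exact: segment_compact.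
rewrite compact_cover in cB.
pose D := [set t : ('rV[R]_d * R * R)%type | 0 < t.1.2 /\ forall y, S y ->
   (forall j, `|t.1.1 ord0 j - y j 0| < t.1.2) -> t.2 <= g y].
pose f := fun t : ('rV[R]_d * R * R)%type => ball t.1.1 t.1.2.
have [||D' D'D cov] := cB _ D f.
- by move=> t _; exact: ball_open.
- move=> v Bv; have [del [del0 [c Hc]]] := loc (v^T).
  exists (v, del, c); last exact: ballxx.
  split => // y Sy Hy; apply: Hc => // j; by rewrite mxE.
exists (- \sum_(t <- D') `|t.2|) => y Sy.
have [t tD' Bt] : cover [set` D'] f y^T.
  apply: cov => j /=; rewrite mxE in_itv /= -ler_norml; exact: SM.
have := D'D t tD'; rewrite in_setE => -[_ Ht].
apply: (@le_trans _ _ (- `|t.2|)).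
  rewrite lerN2 (bigD1_seq t) //= ?fset_uniq // lerDl.
  by apply: sumr_ge0.
apply: le_trans (Ht y Sy _); first by rewrite lerNl -normrN ler_norm.
move=> j; case: Bt => _ /(_ ord0 j).
by rewrite /ball /= mxE.
Qed.

End Comp.
Section Main.
Variable R : realType.

Lemma upd_same n d (x : 'I_n -> 'cV[R]_d) i y : upd x i y i = y.
Proof. by rewrite /upd eqxx. Qed.

Lemma upd_upd n d (x : 'I_n -> 'cV[R]_d) i y w : upd (upd x i y) i w = upd x i w.
Proof. by apply: funext => j; rewrite /upd; case: eqP. Qed.

Lemma conv1 d (S : set 'cV[R]_d) y : S y -> conv S y.
Proof.
move=> Sy; exists 1%N, (fun=> 1), (fun=> y); split => //; split.
  by rewrite big_ord1.
by split => //; rewrite big_ord1 scale1r.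
Qed.

Lemma OmP n d q X Delta A Omega theta H gamma (xt : 'I_n -> 'cV[R]_d) i w :
  @setting R n d q X Delta A Omega theta H gamma ->
  (forall j, conv (X j) (xt j)) -> X i w -> Omega (avg A (upd xt i w)).
Proof.
move=> [_ [_ [_ [Om _]]]] xtc Xw.
have [|e [e0 He]] := Om (upd xt i w).
  by move=> j; rewrite /upd; case: eqP => [->|_]; [exact: conv1|exact: xtc].
by apply: He; rewrite subrr enorm0.
Qed.

Lemma F_lb n d q X Delta A Omega theta H gamma (xt : 'I_n -> 'cV[R]_d) i :
  @setting R n d q X Delta A Omega theta H gamma ->
  (forall j, conv (X j) (xt j)) ->
  exists c, forall w, X i w -> c <= fcost theta A i (upd xt i w).
Proof.
move=> hs xtc; have := hs.
move=> [Xne [Xcl [Xdiam [Om [lsc [H0 [g0 hold]]]]]]].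
have [x0 Xx0] := Xne i.
apply: (@lb_compact _ _ _ _ (\sum_j `|x0 j 0| + Delta)).
  move=> y Xy j.
  have h1 := coord_le_enorm (y - x0) j; rewrite !mxE in h1.
  have h2 := Xdiam i y x0 Xy Xx0.
  have h3 : `|x0 j 0| <= \sum_j `|x0 j 0|.
    by rewrite (bigD1 j) //= lerDl; apply: sumr_ge0.
  have h4 := ler_normD (y j 0 - x0 j 0) (x0 j 0); rewrite subrK in h4.
  lra.
move=> x.
case: (pselect (X i x)) => Xx; last first.
  case: (pselect (exists del : R, 0 < del /\ forall y, X i y ->
      ~ (forall j, `|x j 0 - y j 0| < del))) => [[del [del0 Hd]]|Hn].
    exists del; split => //; exists 0 => y Xy Hy; by case: (Hd y Xy Hy).
  exfalso; apply: Xx; apply: Xcl => e e0.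
  have dp : 0 < e / (d%:R + 1) by rewrite divr_gt0 // ltr_pwDr.
  apply: contrapT => Hne; apply: Hn; exists (e / (d%:R + 1)); split => // y Xy Hy.
  apply: Hne; exists y; split => //.
  apply: le_lt_trans (enorm_le_sum _) _.
  apply: (@le_lt_trans _ _ (\sum_(j < d) e / (d%:R + 1))).
    by apply: ler_sum => j _; rewrite !mxE distrC ltW.
  rewrite sumr_const card_ord -[_ *+ d]mulr_natl.
  rewrite mulrA ltr_pdivrMr ?ltr_pwDr //; nra.
pose y0 := avg A (upd xt i x).
have Oy0 : Omega y0 by exact: (OmP hs xtc Xx).
have [del1 [del10 Hl]] := lsc i y0 Oy0 x Xx 1 ltr01.
pose C := \sum_(k < q) \sum_(j < d) `|n%:R^-1 * A i k j|.
have C0 : 0 <= C by apply: sumr_ge0 => k _; apply: sumr_ge0.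
pose del := Num.min (del1 / (d%:R + 1)) (1 / (C + 1)).
have dd1 : 0 < del1 / (d%:R + 1) by rewrite divr_gt0 // ltr_pwDr.
have dd2 : 0 < 1 / (C + 1) by rewrite divr_gt0 // ltr_pwDr.
have del0 : 0 < del by rewrite lt_min dd1 dd2.
exists del; split => //; exists (theta i x y0 - 1 - H) => y Xy Hy.
have Hy' : forall j, `|(y - x) j 0| <= del.
  by move=> j; rewrite !mxE distrC ltW.
have e1 : enorm (y - x) < del1.
  apply: le_lt_trans (enorm_le_sum _) _.
  apply: (@le_lt_trans _ _ (\sum_(j < d) del1 / (d%:R + 1))).
    apply: ler_sum => j _; apply: le_trans (Hy' j) _.
    by rewrite ge_min lexx.
  rewrite sumr_const card_ord -[_ *+ d]mulr_natl.
  rewrite mulrA ltr_pdivrMr ?ltr_pwDr //; nra.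
have l1 := Hl y Xy e1.
have Oy : Omega (avg A (upd xt i y)) by exact: (OmP hs xtc Xy).
have h1 := hold i y y0 (avg A (upd xt i y)) Xy Oy0 Oy.
have eavg : avg A (upd xt i y) - y0 = n%:R^-1 *: (A i *m (y - x)).
  rewrite /y0 /avg -scalerBr -sumrB (bigD1 i) //= big1 ?addr0.
    by rewrite !upd_same mulmxBr.
  by move=> j /negPf ji; rewrite /upd ji subrr.
have en : enorm (avg A (upd xt i y) - y0) <= 1.
  rewrite eavg; apply: le_trans (enorm_le_sum _) _.
  apply: (@le_trans _ _ (C * del)).
    rewrite /C mulr_suml; apply: ler_sum => k _.
    rewrite !mxE mulr_sumr mulr_suml.
    apply: le_trans (ler_norm_sum _ _ _) _.
    apply: ler_sum => j _; rewrite mulrA normrM.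
    by apply: ler_wpM2l => //; exact: Hy'.
  apply: (@le_trans _ _ (C * (1 / (C + 1)))).
    by apply: ler_wpM2l => //; rewrite ge_min lexx orbT.
  rewrite mul1r ler_pdivrMr ?ltr_pwDr //; lra.
have pw : powR (enorm (avg A (upd xt i y) - y0)) gamma <= 1.
  have := @ge0_ler_powR R gamma (ltW g0) (enorm (avg A (upd xt i y) - y0)) 1.
  rewrite powR1 /=; apply => //; rewrite nnegrE ?enorm_ge0 //.
have h2 : H * powR (enorm (avg A (upd xt i y) - y0)) gamma <= H.
  by rewrite -[leRHS]mulr1 ler_wpM2l // ltW.
rewrite /fcost upd_same.
move: h1; rewrite ler_norml => /andP[h1 _].
lra.
Qed.

End Main.
Section Main2.
Variable R : realType.

Lemma tf_le n d q (X : 'I_n -> set 'cV[R]_d) theta (A : 'I_n -> 'M[R]_(q, d)) xt i c w :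
  (forall w, X i w -> c <= fcost theta A i (upd xt i w)) -> X i w ->
  tfcost X theta A i (upd xt i w) <= fcost theta A i (upd xt i w).
Proof.
move=> lb Xw; apply: ge_inf.
  exists c => r [a [z [[a0 a1] [Xz [_ ->]]]]].
  have -> : c = \sum_k a k * c by rewrite -mulr_suml a1 mul1r.
  apply: ler_sum => k _; rewrite upd_upd; apply: ler_wpM2l => //; exact: lb.
exists (fun k => if k == ord0 then 1 else 0), (fun=> w).
have s1 : \sum_(k < d.+1) (if k == ord0 then 1 else 0 : R) = 1.
  by rewrite (bigD1 ord0) //= big1 ?addr0 // => k /negPf ->.
split; first split => //; first by move=> k; case: eqP.
split => //; split.
  by rewrite upd_same -scaler_suml s1 scale1r.
rewrite upd_upd (bigD1 ord0) //= big1 ?addr0 ?mul1r // => k /negPf ->.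
by rewrite mul0r.
Qed.

End Main2.

Unset Implicit Arguments.
Theorem lemma1 (R : realType) (n d q : nat) (X : 'I_n -> set 'cV[R]_d) (Delta : R)
  (A : 'I_n -> 'M[R]_(q, d)) (Omega : set 'cV[R]_q)
  (theta : 'I_n -> 'cV[R]_d -> 'cV[R]_q -> R) (H gamma : R) :
  setting X Delta A Omega theta H gamma ->
  forall (xt : 'I_n -> 'cV[R]_d), (forall j, conv (X j) (xt j)) ->
  forall eta : R, 0 <= eta ->
  (forall (i : 'I_n) (z : 'I_d.+1 -> 'cV[R]_d) (a : 'I_d.+1 -> R) (h : 'cV[R]_d),
     is_generator X theta A i xt z a ->
     subdiff X theta A i xt h ->
     (forall y, conv (range z) y -> - (eta * enorm (y - xt i)) <= dotv h (y - xt i)) ->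
     forall k, `|tfcost X theta A i (upd xt i (z k)) - tfcost X theta A i xt|
                 <= eta * enorm (z k - xt i))
  /\
  (forall (Z : 'I_n -> 'I_d.+1 -> 'cV[R]_d) (a : 'I_n -> 'I_d.+1 -> R),
     (forall i, is_generator X theta A i xt (Z i) (a i) /\
        exists h, subdiff X theta A i xt h /\
          (forall y, conv (range (Z i)) y ->
             - (eta * enorm (y - xt i)) <= dotv h (y - xt i))) ->
     eta_stable X theta A (eta * Delta) xt Z).
Proof.
move=> hs xt xtc eta eta0.
have hs' := hs; move: hs' => [Xne [Xcl [Xdiam [Om [lsc [H0 [g0 hold]]]]]]].
have part1 : forall (i : 'I_n) (z : 'I_d.+1 -> 'cV[R]_d) (a : 'I_d.+1 -> R) (h : 'cV[R]_d),
     is_generator X theta A i xt z a ->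
     subdiff X theta A i xt h ->
     (forall y, conv (range z) y -> - (eta * enorm (y - xt i)) <= dotv h (y - xt i)) ->
     forall k, `|tfcost X theta A i (upd xt i (z k)) - tfcost X theta A i xt|
                 <= eta * enorm (z k - xt i).
  move=> i z a h [[a0 a1] [apos [Xz [xz tfz]]]] sd hyp k.
  have [c lb] := F_lb i hs xtc.
  set T0 := tfcost X theta A i xt.
  pose F w := fcost theta A i (upd xt i w).
  pose e l := F (z l) - T0 - dotv h (z l - xt i).
  have Tle : forall l, tfcost X theta A i (upd xt i (z l)) <= F (z l).
    by move=> l; apply: (tf_le lb); exact: Xz.
  have Tge : forall l, T0 + dotv h (z l - xt i) <= tfcost X theta A i (upd xt i (z l)).
    by move=> l; apply: sd; apply: conv1; exact: Xz.
  have e0 : forall l, 0 <= e l.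
    by move=> l; have := Tle l; have := Tge l; rewrite /e; lra.
  have esum : \sum_l a l * e l = 0.
    rewrite /e.
    under eq_bigr => l _ do rewrite !mulrBr -dotvZr.
    rewrite !sumrB -tfz -mulr_suml a1 mul1r subrr add0r -dotv_sumr.
    under eq_bigr => l _ do rewrite scalerBr.
    rewrite sumrB -scaler_suml a1 scale1r -xz subrr dotv0r.
    by rewrite oppr0.
  have ek : e k <= 0.
    have : a k * e k <= \sum_l a l * e l.
      rewrite (bigD1 k) //= lerDl; apply: sumr_ge0 => l _.
      by apply: mulr_ge0.
    by rewrite esum pmulr_rle0.
  set p := dotv h (z k - xt i).
  have lo : - (eta * enorm (z k - xt i)) <= p.
    by apply: hyp; apply: conv1; exists k.
  have hi : p <= eta * enorm (z k - xt i).
    pose b l := a l * (1 + a k) - (if l == k then a k else 0).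
    have sif : forall (G : 'I_d.+1 -> R), \sum_l (if l == k then a k else 0) * G l = a k * G k.
      move=> G; rewrite (bigD1 k) //= eqxx big1 ?addr0 // => l /negPf ->.
      by rewrite mul0r.
    have : conv (range z) (xt i + (- a k) *: (z k - xt i)).
      exists d.+1, b, z; split.
        move=> l; rewrite /b; case: eqP => [->|_].
          by rewrite mulrDr mulr1 addrAC subrr add0r mulr_ge0 // ltW.
        by rewrite subr0 mulr_ge0 // addr_ge0 // ltW.
      split.
        rewrite /b sumrB -mulr_suml a1 mul1r.
        have := sif (fun=> 1); under eq_bigr => l _ do rewrite mulr1.
        by move=> ->; rewrite mulr1 addrK.
      split; first by move=> l; exists l.
      under eq_bigr => l _ do rewrite /b scalerBl.
      rewrite sumrB.
      have -> : \sum_l (if l == k then a k else 0) *: z l = a k *: z k.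
        rewrite (bigD1 k) //= eqxx big1 ?addr0 // => l /negPf ->.
        by rewrite scale0r.
      under eq_bigr => l _ do rewrite mulrC -scalerA.
      rewrite -scaler_sumr -xz scalerDl scale1r scalerBr scaleNr. rewrite scaleNr opprK -addrA [- _ + _]addrC.
      by rewrite addrA.
    move/hyp; rewrite [xt i + _]addrC addrK dotvZr enormZ normrN.
    rewrite (ger0_norm (ltW (apos k))) -/p mulNr lerN2 mulrCA ler_pM2l //.
  move: (Tle k) (Tge k) ek; rewrite /e -/p => t1 t2 ek'.
  rewrite ler_norml; apply/andP; split; lra.
split => // Z a Hz i k.
have [gen [h [sd hyp]]] := Hz i.
have := gen => -[[a0 a1] [apos [Xz [xz tfz]]]].
have := part1 i (Z i) (a i) h gen sd hyp k.
have dl : enorm (Z i k - xt i) <= Delta.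
  have -> : Z i k - xt i = \sum_l a i l *: (Z i k - Z i l).
    under eq_bigr => l _ do rewrite scalerBr.
    by rewrite sumrB -scaler_suml a1 scale1r -xz.
  apply: le_trans (enorm_sum _) _.
  apply: (@le_trans _ _ (\sum_l a i l * Delta)).
    apply: ler_sum => l _; rewrite enormZ ger0_norm //.
    by apply: ler_wpM2l => //; apply: Xdiam.
  by rewrite -mulr_suml a1 mul1r.
rewrite ler_norml => /andP[_ h2].
have := ler_wpM2l eta0 dl; lra.
Qed.
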